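(* Let $T\in\mathcal{L}(\mathcal{H})$ have closed range and let $n\ge1$. If $T^n$ is hypo-EP, then $T$ is $n$-hypo-EP.
   Context: $\mathcal{H}$ is a Hilbert space, $\mathcal{L}(\mathcal{H})$ the bounded operators on it; $R(\cdot)$ denotes range. An operator $A$ is hypo-EP if $A$ has closed range and $R(A)\subset R(A^* )$ (equivalently $A^\dagger A-AA^\dagger\ge0$, with $A^\dagger$ the Moore–Penrose inverse). For $n\ge1$, $T$ is $n$-hypo-EP if $T$ has closed range and $R(T^n)\subset R(T^* )$. *)

(* Defs.v *)
From HB Require Import structures.
From mathcomp Require Import all_boot all_order all_algebra.
From mathcomp Require Import all_classical all_reals all_analysis.
From mathcomp Require Import complex.
Set Implicit Arguments. Unset Strict Implicit. Unset Printing Implicit Defensive.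
Import Order.TTheory GRing.Theory Num.Theory.
Import numFieldNormedType.Exports.
Local Open Scope classical_set_scope.
Local Open Scope ring_scope.

Definition is_inner_product (R : realType) (V : normedModType R[i])
  (ip : V -> V -> R[i]) : Prop :=
  [/\ forall (a : R[i]) (x y z : V), ip (a *: x + y) z = a * ip x z + ip y z,
      forall x y : V, ip y x = (ip x y)^* &
      forall x : V, ip x x = `|x| ^+ 2].

Definition is_adjoint (R : realType) (V : normedModType R[i])
  (ip : V -> V -> R[i]) (A S : V -> V) : Prop :=
  forall x y : V, ip (A x) y = ip x (S y).

Definition hypoEP (R : realType) (V : normedModType R[i])
  (A As : V -> V) : Prop :=
  closed (range A) /\ range A `<=` range As.

Definition n_hypoEP (R : realType) (V : normedModType R[i]) (n : nat)
  (T Ts : V -> V) : Prop :=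
  closed (range T) /\ range (iter n T) `<=` range Ts.

(* Main.v *)
Require Import Defs.
From HB Require Import structures.
From mathcomp Require Import all_boot all_order all_algebra.
From mathcomp Require Import all_classical all_reals all_analysis.
From mathcomp Require Import complex.
Import Order.TTheory GRing.Theory Num.Theory.
Import numFieldNormedType.Exports.
Local Open Scope classical_set_scope.
Local Open Scope ring_scope.

Theorem mainTheorem14 (R : realType) (V : completeNormedModType R[i])
  (ip : V -> V -> R[i]) (hip : is_inner_product ip)
  (T : {linear V -> V}) (hTc : continuous T)
  (Ts : V -> V) (hTs : is_adjoint ip T Ts)
  (n : nat) (hn : (1 <= n)%N)
  (Tns : V -> V) (hTns : is_adjoint ip (iter n T) Tns) :
  closed (range T) -> hypoEP (iter n T) Tns -> n_hypoEP n T Ts.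
Proof.
move=> hc [_ hsub]; split => // y /hsub [z _ <-].
case: hip => hlin hsym hnorm.
have hk : forall k u w, ip (iter k T u) w = ip u (iter k Ts w).
  elim=> [|k IH] u w //=.
  by rewrite hTs IH -iterSr.
have eqd : Tns z = iter n Ts z.
  set a := Tns z; set b := iter n Ts z.
  have hab : forall u, ip u a = ip u b by move=> u; rewrite -hTns hk.
  set d := a - b.
  have hdd : ip d d = 0.
    have -> : d = (-1) *: b + a by rewrite /d scaleN1r addrC.
    rewrite hlin (hsym ((-1) *: b + a) b) (hsym _ a) hab.
    by rewrite mulN1r addNr.
  move: hdd; rewrite hnorm => /eqP; rewrite sqrf_eq0 normr_eq0 subr_eq0.
  by move/eqP.
clear hsub; case: n hn hTns hk eqd => // m _ _ _ ->.
by exists (iter m Ts z) => //=.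
Qed.
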